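(* Let $n\in\mathbb{N}$, $t\geq0$, $c\geq1$, and $\mathcal{E}'_n=c\cdot\mathcal{E}_n$. Then $$\mathrm{Diff}_t(\mathcal{E}_n):=\left|\mathrm{Pr}^{\mathcal{E}_n}(\lozenge^{\leq t}g)-\mathrm{Pr}^{\mathcal{E}'_n}(\lozenge^{\leq t}g)\right|=\sum_{k=0}^{n-1}\frac{t^k}{k!}\left(e^{-t}-c^ke^{-ct}\right).$$ If $c>1$, the function $t\mapsto\mathrm{Diff}_t(\mathcal{E}_n)$ has a local maximum at $t=\frac{n\ln(c)}{c-1}$ that is global on $[0,\infty)$.
   Context: The Erlang CTMC $\mathcal{E}_n$ has non-goal states $s_0,\dots,s_{n-1}$ and a goal state $s_n=g$, initial state $s_0$ (for $n=0$ it consists of $g$ only), all $s_0,\dots,s_{n-1}$ carry the same label and $g$ a different one, all exit rates equal $1$, $P(s_i,s_{i+1})=1$ for $0\leq i<n$, and $P(g,g)=1$. (In a CTMC the process stays in state $s$ an exponentially distributed time with rate $E(s)$ and then jumps to $s'$ with probability $P(s,s')$.) $c\cdot\mathcal{E}_n$ is obtained by multiplying all exit rates by $c$. $\mathrm{Pr}^{\mathcal{M}}(\lozenge^{\leq t}g)$ is the probability that $\mathcal{M}$ started in its initial state reaches $g$ within time $t$. *)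

(* Defs.v *)
From Stdlib Require Import Reals Lra List Arith.
From Coquelicot Require Import Coquelicot.
Open Scope R_scope.

Definition sumR (n : nat) (f : nat -> R) : R :=
  fold_right Rplus 0 (map f (seq 0 n)).

(* A finite labelled CTMC with states 0 .. nstates-1.
   E s = exit rate of s, P s s' = jump probability, init = initial state,
   goal s = whether s carries the goal label g. *)
Record CTMC := mkCTMC {
  nstates : nat;
  E : nat -> R;
  P : nat -> nat -> R;
  init : nat;
  goal : nat -> bool
}.

(* Probability of reaching a goal state from s within time t using at most
   k jumps (the standard integral characterisation of time-bounded
   reachability in CTMCs, Baier-Haverkort-Hermanns-Katoen 2003, unfolded k
   times). *)
Fixpoint reach_k (M : CTMC) (k : nat) (s : nat) (t : R) : R :=
  if Rlt_dec t 0 then 0 else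
  if goal M s then 1 else
  match k with
  | O => 0
  | S k' =>
      RInt (fun x => E M s * exp (- (E M s) * x) *
                     sumR (nstates M) (fun s' => P M s s' * reach_k M k' s' (t - x)))
           0 t
  end.

(* Pr^M (<>^{<= t} g): the least fixed point, i.e. the limit over the
   number of allowed jumps (the sequence is nondecreasing and bounded). *)
Definition Pr_reach (M : CTMC) (t : R) : R :=
  real (Lim_seq (fun k => reach_k M k (init M) t)).

(* c . E_n : states s_0..s_{n-1} (non-goal), s_n = g (goal), initial s_0,
   every exit rate equal to c, P(s_i, s_{i+1}) = 1, P(g,g) = 1. *)
Definition erlang (c : R) (n : nat) : CTMC :=
  mkCTMC (S n)
    (fun _ => c)
    (fun s s' => if Nat.ltb s n then (if Nat.eqb s' (S s) then 1 else 0)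
                 else (if Nat.eqb s' s then 1 else 0))
    0%nat
    (fun s => Nat.eqb s n).

Definition Diff (c : R) (n : nat) (t : R) : R :=
  Rabs (Pr_reach (erlang 1 n) t - Pr_reach (erlang c n) t).

(* Main.v *)
Require Import Defs.
From Stdlib Require Import Reals List Arith Lra Lia.
From Coquelicot Require Import Coquelicot.
Open Scope R_scope.

Lemma sumR_S n f : sumR (S n) f = sumR n f + f n.
Proof.
  unfold sumR. rewrite seq_S, map_app, fold_right_app. simpl.
  induction (map f (seq 0 n)) as [|a l IH]; simpl; [lra|]. rewrite IH. lra.
Qed.

Lemma sumR_0 f : sumR 0 f = 0.
Proof. reflexivity. Qed.

Lemma sumR_ext n f g : (forall k, (k < n)%nat -> f k = g k) -> sumR n f = sumR n g.
Proof.
  induction n; intros H; [reflexivity|]. rewrite !sumR_S, IHn, H; auto.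
Qed.

Lemma sumR_minus n f g : sumR n (fun k => f k - g k) = sumR n f - sumR n g.
Proof. induction n; [rewrite !sumR_0; lra|]. rewrite !sumR_S, IHn. lra. Qed.

Lemma sumR_scal n a f : sumR n (fun k => f k * a) = sumR n f * a.
Proof. induction n; [rewrite !sumR_0; lra|]. rewrite !sumR_S, IHn. lra. Qed.

Lemma sumR_zero N : sumR N (fun _ => 0) = 0.
Proof. induction N; [apply sumR_0|]. rewrite sumR_S, IHN; lra. Qed.

Lemma sumR_delta N a f : (a < N)%nat ->
  sumR N (fun s => (if Nat.eqb s a then 1 else 0) * f s) = f a.
Proof.
  induction N; intros H; [lia|]. rewrite sumR_S.
  destruct (Nat.eq_dec a N) as [->|Hne].
  - rewrite Nat.eqb_refl. rewrite (sumR_ext _ _ (fun _ => 0)).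
    + rewrite sumR_zero. lra.
    + intros k Hk. destruct (Nat.eqb_spec k N); [lia|]. lra.
  - rewrite IHN; [|lia]. destruct (Nat.eqb_spec N a); [lia|]. lra.
Qed.

Definition Q (j : nat) (u : R) : R := sumR j (fun i => u ^ i / INR (fact i)).

Lemma Q_S j u : Q (S j) u = Q j u + u ^ j / INR (fact j).
Proof. unfold Q. now rewrite sumR_S. Qed.

Lemma Q_S0 j : Q (S j) 0 = 1.
Proof.
  induction j. { unfold Q. rewrite sumR_S, sumR_0. simpl. lra. }
  rewrite Q_S, IHj. simpl. lra.
Qed.

Lemma Q_deriv j u : is_derive (Q (S j)) u (Q j u).
Proof.
  induction j.
  - apply (is_derive_ext (fun _ => 1)).
    + intros t. rewrite Q_S. unfold Q. rewrite sumR_0. simpl. lra.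
    + unfold Q. rewrite sumR_0. auto_derive; auto.
  - eapply is_derive_ext. { intros t. symmetry. apply Q_S. }
    rewrite Q_S.
    apply (is_derive_plus (Q (S j)) (fun t => t ^ S j / INR (fact (S j)))); auto.
    auto_derive; [auto|].
    change (match j with | 0%nat => 1 | S _ => INR j + 1 end) with (INR (S j)).
    replace (fact j + j * fact j)%nat with (S j * fact j)%nat by (simpl; lia).
    rewrite mult_INR. field.
    split; [apply INR_fact_neq_0|]. apply not_0_INR. lia.
Qed.

Lemma Q_ex_derive j u : ex_derive (Q j) u.
Proof.
  destruct j.
  - apply (ex_derive_ext (fun _ => 0)). { intros t. unfold Q. rewrite sumR_0. reflexivity. }
    auto_derive; auto.
  - eexists. apply Q_deriv.
Qed.

Lemma Q_cont j u : continuous (Q j) u.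
Proof. exact (@ex_derive_continuous R_AbsRing R_NormedModule (Q j) u (Q_ex_derive j u)). Qed.

Lemma integ j c t :
  RInt (fun x => c * exp (- c * x) * (1 - exp (- (c * (t - x))) * Q j (c * (t - x)))) 0 t
  = 1 - exp (- (c * t)) * Q (S j) (c * t).
Proof.
  apply is_RInt_unique.
  pose (F := fun x => - exp (- c * x) + exp (- (c * t)) * Q (S j) (c * (t - x))).
  replace (1 - exp (- (c * t)) * Q (S j) (c * t)) with (minus (F t) (F 0)).
  2:{ unfold minus, plus, opp, F; simpl. rewrite Rminus_diag, Rmult_0_r, Q_S0, Rminus_0_r.
      replace (- c * 0) with 0 by ring. replace (- c * t) with (- (c * t)) by ring.
      rewrite exp_0. lra. }
  apply (is_RInt_derive F).
  - intros x _. unfold F. auto_derive.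
    + apply Q_ex_derive.
    + rewrite (is_derive_unique _ _ _ (Q_deriv j _)).
      replace (- (c * t)) with (- c * x + - (c * (t - x))) by ring.
      rewrite exp_plus. replace (t + - x) with (t - x) by ring. ring.
  - intros x _. apply (@ex_derive_continuous R_AbsRing R_NormedModule).
    auto_derive. apply Q_ex_derive.
Qed.

Definition H c j t := if Rlt_dec t 0 then 0 else 1 - exp (- (c * t)) * Q j (c * t).

Lemma reach_eq c n j : (j <= n)%nat -> forall m t,
  reach_k (erlang c n) (m + j) (n - j) t = H c j t.
Proof.
  induction j; intros Hj m t.
  - rewrite Nat.add_0_r, Nat.sub_0_r. unfold H.
    destruct m; simpl reach_k; destruct (Rlt_dec t 0); try reflexivity;
    rewrite Nat.eqb_refl; unfold Q; rewrite sumR_0; ring.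
  - rewrite Nat.add_succ_r. simpl reach_k. unfold H.
    destruct (Rlt_dec t 0); [reflexivity|].
    replace (n - S j =? n)%nat with false by (symmetry; apply Nat.eqb_neq; lia).
    replace (n - S j <? n)%nat with true by (symmetry; apply Nat.ltb_lt; lia).
    rewrite <- integ.
    apply RInt_ext. intros x Hx. rewrite Rmin_left in Hx by lra. rewrite Rmax_right in Hx by lra.
    f_equal. rewrite sumR_delta by lia.
    replace (S (n - S j)) with (n - j)%nat by lia.
    rewrite IHj by lia. unfold H. destruct (Rlt_dec (t - x) 0); [lra|]. reflexivity.
Qed.

Lemma Pr_eq c n t : Pr_reach (erlang c n) t = H c n t.
Proof.
  unfold Pr_reach.
  rewrite <- (Lim_seq_incr_n _ n).
  rewrite (Lim_seq_ext _ (fun _ => H c n t)).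
  - rewrite Lim_seq_const. reflexivity.
  - intros k. simpl init. replace 0%nat with (n - n)%nat at 1 by lia.
    apply reach_eq. lia.
Qed.

Lemma mono f df a b : a <= b -> (forall x, a <= x <= b -> is_derive f x (df x)) ->
  (forall x, a <= x <= b -> 0 <= df x) -> f a <= f b.
Proof.
  intros Hab Hd Hp.
  destruct (MVT_gen f a b df) as [y [Hy Heq]].
  - intros x Hx. rewrite Rmin_left, Rmax_right in Hx by lra. apply Hd. lra.
  - intros x Hx. rewrite Rmin_left, Rmax_right in Hx by lra.
    apply continuity_pt_filterlim.
    apply (@ex_derive_continuous R_AbsRing R_NormedModule). eexists. apply Hd. lra.
  - rewrite Rmin_left, Rmax_right in Hy by lra.
    assert (0 <= df y * (b - a)). { apply Rmult_le_pos; [apply Hp; lra| lra]. }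
    lra.
Qed.

Definition G n u := exp (- u) * Q n u.

Lemma G_deriv m u : is_derive (G (S m)) u (- (exp (- u) * (u ^ m / INR (fact m)))).
Proof.
  unfold G. auto_derive. { apply Q_ex_derive. }
  rewrite (is_derive_unique _ _ _ (Q_deriv m _)). rewrite Q_S. ring.
Qed.

Lemma exp_le x y : x <= y -> exp x <= exp y.
Proof. intros [H|H]; [left; apply exp_increasing; auto| subst; lra]. Qed.

Lemma pow_fact_nonneg u m : 0 <= u -> 0 <= u ^ m / INR (fact m).
Proof.
  intros. apply Rdiv_le_0_compat; [apply pow_le; auto| apply INR_fact_lt_0].
Qed.

Lemma G_decr n a b : 0 <= a <= b -> G n b <= G n a.
Proof.
  intros Hab. destruct n.
  - unfold G, Q. rewrite !sumR_0. lra.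
  - assert (- G (S n) a <= - G (S n) b); [|lra].
    apply (mono (fun u => - G (S n) u) (fun u => exp (- u) * (u ^ n / INR (fact n)))); [lra| |].
    + intros x _. eapply is_derive_ext. { intros. reflexivity. }
      replace (exp (- x) * (x ^ n / INR (fact n))) with (- (- (exp (- x) * (x ^ n / INR (fact n))))) by ring.
      apply (is_derive_opp (G (S n))). apply G_deriv.
    + intros x Hx. apply Rmult_le_pos; [left; apply exp_pos| apply pow_fact_nonneg; lra].
Qed.

Lemma sumG_eq n c t : sumR n (fun k => t ^ k / INR (fact k) * (exp (- t) - c ^ k * exp (- (c * t))))
  = G n t - G n (c * t).
Proof.
  unfold G. induction n.
  - unfold Q. rewrite !sumR_0. ring.
  - rewrite sumR_S, IHn, !Q_S. rewrite Rpow_mult_distr. field. apply INR_fact_neq_0.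
Qed.

Lemma Diff_eq c n t : 1 <= c -> 0 <= t -> Diff c n t = G n t - G n (c * t).
Proof.
  intros Hc Ht. unfold Diff. rewrite !Pr_eq. unfold H.
  destruct (Rlt_dec t 0); [lra|]. rewrite Rmult_1_l.
  rewrite Rabs_minus_sym, Rabs_right.
  - unfold G. ring.
  - assert (HG : G n (c * t) <= G n t). { apply G_decr. split; [lra|]. nra. }
    unfold G in HG. lra.
Qed.

Lemma D_deriv m c t : is_derive (fun t => G (S m) t - G (S m) (c * t)) t
   (t ^ m / INR (fact m) * (c ^ (S m) * exp (- (c * t)) - exp (- t))).
Proof.
  auto_derive.
  - split; [eexists; apply G_deriv|split; [eexists; apply G_deriv|auto]].
  - rewrite !(is_derive_unique _ _ _ (G_deriv m _)).
    rewrite Rpow_mult_distr. simpl pow. field. apply INR_fact_neq_0.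
Qed.

Lemma cpow c m : 0 < c -> c ^ m = exp (INR m * ln c).
Proof. intros. rewrite <- ln_pow by auto. rewrite exp_ln; auto. apply pow_lt; auto. Qed.

Lemma D_max n c t : 1 < c -> 0 <= t ->
  G n t - G n (c * t) <= G n (INR n * ln c / (c - 1)) - G n (c * (INR n * ln c / (c - 1))).
Proof.
  intros Hc Ht. set (t0 := INR n * ln c / (c - 1)).
  assert (Hlc : 0 < ln c) by (rewrite <- ln_1; apply ln_increasing; lra).
  assert (Ht0 : t0 * (c - 1) = INR n * ln c) by (unfold t0; field; lra).
  destruct n.
  - unfold G, Q. rewrite !sumR_0. lra.
  - assert (Hcp : forall x, 0 <= x -> (x <= t0 <-> exp (- x) <= c ^ S n * exp (- (c * x)))).
    { intros x Hx. rewrite cpow by lra. rewrite <- exp_plus. split.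
      - intros Hxt. apply exp_le. nra.
      - intros He. destruct (Rle_dec x t0) as [|Hn]; auto. exfalso.
        assert (exp (INR (S n) * ln c + - (c * x)) < exp (- x)); [|lra].
        apply exp_increasing. nra. }
    assert (0 <= t0) by (unfold t0; apply Rdiv_le_0_compat; [apply Rmult_le_pos; [apply pos_INR|lra]|lra]).
    destruct (Rle_dec t t0).
    + apply (mono (fun t => G (S n) t - G (S n) (c * t)) (fun x => x ^ n / INR (fact n) * (c ^ (S n) * exp (- (c * x)) - exp (- x))) t t0); auto.
      * intros x _. apply D_deriv.
      * intros x Hx. apply Rmult_le_pos; [apply pow_fact_nonneg; lra|].
        assert (Hx' := proj1 (Hcp x ltac:(lra)) ltac:(lra)). lra.
    + assert (- (G (S n) t - G (S n) (c * t)) >= - (G (S n) t0 - G (S n) (c * t0))); [|lra].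
      apply Rle_ge.
      apply (mono (fun t => - (G (S n) t - G (S n) (c * t))) (fun x => - (x ^ n / INR (fact n) * (c ^ (S n) * exp (- (c * x)) - exp (- x)))) t0 t); [lra| |].
      * intros x _. apply (is_derive_opp (fun t => G (S n) t - G (S n) (c * t))). apply D_deriv.
      * intros x Hx. simpl.
        assert (exp (- x) >= c ^ S n * exp (- (c * x)) \/ x = t0) as [Hg|Heq].
        { destruct (Rle_dec x t0) as [Hle|Hle].
          - right; lra.
          - left. destruct (Rle_dec (exp (- x)) (c ^ S n * exp (- (c * x)))) as [Hq|Hq].
            + apply (proj2 (Hcp x ltac:(lra))) in Hq. lra.
            + lra. }
        -- assert (0 <= x ^ n / INR (fact n)) by (apply pow_fact_nonneg; lra).
           assert (0 <= x ^ n / INR (fact n) * (exp (- x) - c ^ S n * exp (- (c * x)))) by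
             (apply Rmult_le_pos; lra).
           simpl in *. lra.
        -- subst x. assert (Hq := proj1 (Hcp t0 H0) (Rle_refl _)).
           (* at t0 the two sides are equal *)
           assert (Hq2 : exp (- t0) >= c ^ S n * exp (- (c * t0))).
           { rewrite cpow by lra. rewrite <- exp_plus. apply Rle_ge, exp_le. nra. }
           assert (0 <= t0 ^ n / INR (fact n)) by (apply pow_fact_nonneg; lra).
           assert (0 <= t0 ^ n / INR (fact n) * (exp (- t0) - c ^ S n * exp (- (c * t0)))) by
             (apply Rmult_le_pos; lra).
           simpl in *. lra.
Qed.

Theorem proposition4 (n : nat) (c : R) (hc : 1 <= c) :
  (forall t : R, 0 <= t ->
     Diff c n t =
     sumR n (fun k => t ^ k / INR (fact k) * (exp (- t) - c ^ k * exp (- (c * t)))))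
  /\
  (1 < c ->
     let t0 := INR n * ln c / (c - 1) in
     (exists eps : R, 0 < eps /\
        forall t : R, 0 <= t -> Rabs (t - t0) < eps -> Diff c n t <= Diff c n t0)
     /\ (forall t : R, 0 <= t -> Diff c n t <= Diff c n t0)).
Proof.
  split.
  - intros t Ht. rewrite Diff_eq, sumG_eq; auto.
  - intros Hc t0.
    assert (Hlc : 0 < ln c) by (rewrite <- ln_1; apply ln_increasing; lra).
    assert (0 <= t0) by (unfold t0; apply Rdiv_le_0_compat; [apply Rmult_le_pos; [apply pos_INR|lra]|lra]).
    assert (Hg : forall t, 0 <= t -> Diff c n t <= Diff c n t0).
    { intros t Ht. rewrite !Diff_eq by lra. apply D_max; lra. }
    split; auto. exists 1. split; [lra|]. intros t Ht _. auto.
Qed.
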